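(* Let $p\ge 1$ and $c>0$ be constants, let $a>0$, and let $x_a:[0,\infty)\to\mathbb{R}$ be the unique solution of $$x'''+c\,x^p\, x''=0,\qquad x(0)=0=x'(0),\quad x''(0)=a,$$ and let $h(a):=\lim_{t\to\infty}x_a'(t)$ (which exists and is finite and positive). Then the limit $\mu(a):=\lim_{t\to\infty}\big(h(a)t-x_a(t)\big)$ exists, is finite and is positive; that is, the graph of $x_a$ has the slant asymptote $h(a)t-\mu(a)$. Moreover, for all $t\ge 0$, $$\max\big(0,\,h(a)t-\mu(a)\big)\le x_a(t)\le h(a)t.$$ *)

(* Defs.v *)
From HB Require Import structures.
From mathcomp Require Import all_boot all_order all_algebra.
From mathcomp Require Import all_classical all_reals all_analysis.
Set Implicit Arguments. Unset Strict Implicit. Unset Printing Implicit Defensive.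

(* Main.v *)
Require Import Defs.
From HB Require Import structures.
From mathcomp Require Import all_boot all_order all_algebra.
From mathcomp Require Import all_classical all_reals all_analysis.
From mathcomp Require Import ring lra.
Import Order.TTheory GRing.Theory Num.Theory.
Import numFieldNormedType.Exports.
Local Open Scope classical_set_scope.
Local Open Scope ring_scope.

Section Helpers.
Variable R : realType.

Lemma pt_cont (f : R -> R) t : 0 < t -> (forall s, 0 < s -> derivable f s 1) ->
  {for t, continuous f}.
Proof.
move=> t0 df.
have h : {within `[t / 2, t + 1], continuous f}.
  apply: derivable_within_continuous => s; rewrite in_itv /= => /andP[s1 _].
  apply: df; apply: lt_le_trans s1; exact: divr_gt0.
apply: (within_continuous_continuous _ h); first by lra.
rewrite in_itv /=; apply/andP; split; lra.
Qed.

Lemma cont_ab (f : R -> R) (a b : R) : 0 <= a -> a < b ->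
  (forall t, 0 < t -> derivable f t 1) ->
  (a = 0 -> f x @[x --> 0^'+] --> f 0) -> {within `[a, b], continuous f}.
Proof.
move=> a0 ab df h0.
apply/continuous_within_itvP => //; split.
- move=> t; rewrite in_itv /= => /andP[hat tb]. apply: pt_cont => //; lra.
- have [a0'|an0] := eqVneq a 0.
    by rewrite a0'; apply: h0.
  apply: cvg_at_right_filter; apply: pt_cont => //; rewrite lt_neqAle eq_sym an0.
  exact: a0.
- apply: cvg_at_left_filter; apply: pt_cont => //; lra.
Qed.

Lemma nd (f df : R -> R) (a b : R) : 0 <= a -> a <= b ->
  (forall t : R, 0 < t -> is_derive t 1 f (df t)) ->
  (forall t, a < t -> t < b -> 0 <= df t) ->
  (a = 0 -> f x @[x --> 0^'+] --> f 0) -> f a <= f b.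
Proof.
move=> a0 ab dF pos h0.
have [->//|ab'] := eqVneq a b.
have ltab : a < b by rewrite lt_neqAle ab' ab.
have der : forall t, 0 < t -> derivable f t 1.
  by move=> t t0; have := dF t t0; case.
apply: (@ger0_derive1_ndecr _ f a b) => //.
- move=> t; rewrite in_itv /= => /andP[hat tb]; apply: der; lra.
- move=> t; rewrite in_itv /= => /andP[hat tb].
  have Ht : 0 < t by lra.
  have Hd := dF t Ht; rewrite derive1E derive_val.
  exact: pos.
- exact: cont_ab.
Qed.

Lemma si (f df : R -> R) (a b : R) : 0 <= a -> a < b ->
  (forall t : R, 0 < t -> is_derive t 1 f (df t)) ->
  (forall t, a < t -> t < b -> 0 < df t) ->
  (a = 0 -> f x @[x --> 0^'+] --> f 0) -> f a < f b.
Proof.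
move=> a0 ab dF pos h0.
have der : forall t, 0 < t -> derivable f t 1.
  by move=> t t0; have := dF t t0; case.
have [|c0 + e] := @MVT _ f df a b ab _ (@cont_ab f a b a0 ab der h0).
  move=> t; rewrite in_itv /= => /andP[hat tb]; apply: dF; lra.
rewrite in_itv /= => /andP[ac cb].
rewrite -subr_gt0 e; apply: mulr_gt0; [exact: pos | lra].
Qed.

Lemma lim_nd (f : R -> R) (B : R) :
  (forall s t, 0 <= s -> s <= t -> f s <= f t) ->
  (forall t, 0 <= t -> f t <= B) ->
  exists l, f t @[t --> +oo] --> l /\ forall t, 0 <= t -> f t <= l.
Proof.
move=> fnd fub.
pose f1 := fun t => f (Num.max 0 t).
have m0 : forall t : R, 0 <= Num.max 0 t by move=> t; rewrite le_max lexx.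
have homo : {homo f1 : n m / n <= m}.
  move=> s t st; apply: fnd => //; rewrite ge_max !le_max lexx /= st orbT.
  by [].
have ub : has_ubound (range f1).
  by exists B => _ [t _ <-]; apply: fub.
have cv := nondecreasing_cvgr homo ub.
exists (sup (range f1)); split.
  apply: cvg_trans cv; apply: near_eq_cvg.
  exists 0; split; first exact: real0.
  by move=> t /= t0; rewrite /f1 max_r // ltW.
move=> t t0; have := ub_le_sup ub; apply.
by exists t => //; rewrite /f1 max_r.
Qed.
End Helpers.


Theorem lemma3 (R : realType) (p c a : R) (x x1 x2 : R -> R)
  (hp : 1 <= p) (hc : 0 < c) (ha : 0 < a)
  (dx : forall t : R, 0 < t -> is_derive t 1 x (x1 t))
  (dx1 : forall t : R, 0 < t -> is_derive t 1 x1 (x2 t))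
  (dx2 : forall t : R, 0 < t -> is_derive t 1 x2 (- c * (x t `^ p) * x2 t))
  (cx : {within `[0, +oo[, continuous x})
  (cx1 : {within `[0, +oo[, continuous x1})
  (cx2 : {within `[0, +oo[, continuous x2})
  (x0 : x 0 = 0) (x10 : x1 0 = 0) (x20 : x2 0 = a) :
  exists h mu : R,
    [/\ 0 < h, (x1 : R -> R) t @[t --> +oo] --> h,
        0 < mu, ((fun s : R => h * s - x s) t) @[t --> +oo] --> mu &
        forall t : R, 0 <= t -> Num.max 0 (h * t - mu) <= x t <= h * t].
Proof.
have r0 : forall f : R -> R, {within `[0, +oo[, continuous f} ->
    f s @[s --> 0^'+] --> f 0.
  by move=> f /(continuous_within_itvcyP 0 f) [].
have r0x := r0 x cx; have r0x1 := r0 x1 cx1; have r0x2 := r0 x2 cx2.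
have sub : forall a' b : R, 0 <= a' -> `[a', b] `<=` `[0, +oo[.
  by move=> a' b a0 s /=; rewrite !in_itv /= => /andP[as' _]; lra.
have p0 : p != 0 by rewrite gt_eqF //; lra.
have cn0 : c != 0 by rewrite gt_eqF.
have x2pos : forall t, 0 <= t -> 0 < x2 t.
  move=> t1 t10; rewrite ltNge; apply/negP => hneg.
  have t1pos : 0 < t1.
    rewrite lt_neqAle t10 andbT; apply/eqP => e; move: hneg; rewrite -e x20; lra.
  have [K _ hK] := @EVT_max _ x 0 t1 t10 (continuous_subspaceW (sub 0 t1 (lexx 0)) cx).
  pose M := 1 + x K `^ p.
  have hM : forall s, s \in `[0, t1] -> x s `^ p <= M.
    move=> s hs; have xsK := hK s hs; have := powR_ge0 (x K) p.
    case: (ltgtP (x s) 0) => [xn|xp|xz] hKp.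
    - rewrite lt0_powR1 // /M; lra.
    - have : x s `^ p <= x K `^ p.
        by apply: ge0_ler_powR => //; [lra | rewrite nnegrE; lra | rewrite nnegrE; lra].
      rewrite /M; lra.
    - rewrite xz (powR0 p0) /M; lra.
  pose k := 2 * c * M.
  pose F := fun s => x2 s ^+ 2 * expR (k * s).
  have dF : forall s : R, 0 < s ->
      is_derive s 1 F (x2 s ^+ 2 * expR (k * s) * (k - 2 * c * x s `^ p)).
    move=> s s0; have := dx2 s s0 => ?.
    rewrite /F; apply: is_derive_eq; rewrite ?scaler1 /GRing.scale /=; ring.
  have Fle : forall s, 0 <= s -> s <= t1 -> F 0 <= F s.
    move=> s s0 st.
    apply: (@nd _ F _ 0 s (lexx 0) s0 dF).
    + move=> u u0 us; apply: mulr_ge0.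
        by apply: mulr_ge0; [exact: sqr_ge0 | exact: expR_ge0].
      have : x u `^ p <= M by apply: hM; rewrite in_itv /=; apply/andP; split; lra.
      rewrite /k; nra.
    + move=> _; rewrite /F.
      apply: cvgM; first by rewrite expr2; apply: cvgM.
      apply: cvg_at_right_filter.
      apply: continuous_comp; last exact: continuous_expR.
      apply: cvgMr; exact: cvg_id.
  have hv : Num.min (x2 0) (x2 t1) <= 0 <= Num.max (x2 0) (x2 t1).
    by rewrite x20 ge_min le_max hneg orbT (ltW ha).
  have [c0 hc0 e0] := @IVT _ x2 0 t1 0 t10
      (continuous_subspaceW (sub 0 t1 (lexx 0)) cx2) hv.
  move: hc0; rewrite in_itv /= => /andP[c00 c0t].
  have := Fle c0 c00 c0t.
  rewrite /F e0 mulr0 expR0 mulr1 x20 expr0n /= mul0r.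
  nra.
have x1nd : forall s t, 0 <= s -> s <= t -> x1 s <= x1 t.
  move=> s t s0 st; apply: (@nd _ x1 x2 s t s0 st dx1) => [u u0 ut|_].
    apply: ltW; apply: x2pos; lra.
  exact: r0x1.
have x1si : forall s t, 0 <= s -> s < t -> x1 s < x1 t.
  move=> s t s0 st; apply: (@si _ x1 x2 s t s0 st dx1) => [u u0 ut|_].
    apply: x2pos; lra.
  exact: r0x1.
have x1pos : forall t, 0 < t -> 0 < x1 t.
  by move=> t t0; rewrite -x10; apply: x1si.
have xnd : forall s t, 0 <= s -> s <= t -> x s <= x t.
  move=> s t s0 st; apply: (@nd _ x x1 s t s0 st dx) => [u u0 ut|_].
    apply: ltW; apply: x1pos; lra.
  exact: r0x.
have xsi : forall s t, 0 <= s -> s < t -> x s < x t.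
  move=> s t s0 st; apply: (@si _ x x1 s t s0 st dx) => [u u0 ut|_].
    apply: x1pos; lra.
  exact: r0x.
have xge0 : forall t, 0 <= t -> 0 <= x t.
  by move=> t t0; rewrite -x0; apply: xnd.
have x11 : 0 < x1 1 by apply: x1pos.
pose T := 1 + (x1 1)^-1.
have T1 : 1 < T by rewrite /T ltrDl invr_gt0.
have xT : 1 <= x T.
  have dT : forall u, u \in `]1, T[ -> is_derive u 1 x (x1 u).
    by move=> u; rewrite in_itv /= => /andP[u1 _]; apply: dx; lra.
  have [c1 + e1] := @MVT _ x x1 1 T T1 dT
     (continuous_subspaceW (sub 1 T ler01) cx).
  rewrite in_itv /= => /andP[c11 c1T].
  have hx1 : x1 1 <= x1 c1 by apply: x1nd; lra.
  have e2 : x1 c1 * (T - 1) = x1 c1 / x1 1 by rewrite /T addrAC subrr add0r.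
  have : 1 <= x1 c1 / x1 1 by rewrite ler_pdivlMr // mul1r.
  have := xge0 1 ler01; lra.
have T0 : 0 <= T by lra.
have xge1 : forall t, T <= t -> 1 <= x t.
  by move=> t Tt; apply: le_trans xT _; apply: xnd.
have pge1 : forall t, T <= t -> 1 <= x t `^ p.
  by move=> t Tt; apply: le_trans (xge1 t Tt) _; apply: le1r_powR => //; apply: xge1.
have ci : 0 < c^-1 by rewrite invr_gt0.
have Lni : forall s t, T <= s -> s <= t ->
    x1 t + c^-1 * x2 t <= x1 s + c^-1 * x2 s.
  move=> s t Ts st.
  pose f := fun u => - (x1 u + c^-1 * x2 u).
  have dfd : forall u : R, 0 < u -> is_derive u 1 f (x2 u * (x u `^ p - 1)).
    move=> u u0; have := dx1 u u0 => ?; have := dx2 u u0 => ?.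
    rewrite /f; apply: is_derive_eq; rewrite ?scaler1 /GRing.scale /=; field; exact: cn0.
  have := @nd _ f _ s t (le_trans T0 Ts) st dfd.
  rewrite /f => H; suff : - (x1 s + c^-1 * x2 s) <= - (x1 t + c^-1 * x2 t) by lra.
  apply: H => [u su ut|s0]; last by exfalso; lra.
  apply: mulr_ge0; first by apply: ltW; apply: x2pos; lra.
  rewrite subr_ge0; apply: pge1; lra.
have cx2ge0 : forall t, 0 <= t -> 0 <= c^-1 * x2 t.
  by move=> t t0; apply: mulr_ge0; [exact: ltW | apply: ltW; apply: x2pos].
have x1ub : forall t, 0 <= t -> x1 t <= x1 T + c^-1 * x2 T.
  move=> t t0; have := cx2ge0 T T0; have := cx2ge0 t t0.
  case: (leP t T) => tT.
    by have := x1nd t T t0 tT; lra.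
  by have := Lni T t (lexx T) (ltW tT); lra.
have [h [hcv hub]] := @lim_nd _ x1 _ x1nd x1ub.
have hgt : forall t, 0 <= t -> x1 t < h.
  move=> t t0; apply: lt_le_trans (hub (t + 1) _); last lra.
  apply: x1si; lra.
have hpos : 0 < h by have := hgt 0 (lexx 0); rewrite x10.
have hL : forall t, T <= t -> h <= x1 t + c^-1 * x2 t.
  move=> t Tt; have t0 : 0 <= t by lra.
  apply: (cvgr_to_le hcv).
  exists t; split; first exact: num_real.
  move=> s ts /=; have := Lni t s Tt (ltW ts); have := cx2ge0 s (ltW (le_lt_trans t0 ts)).
  lra.
pose g := fun s : R => h * s - x s.
have dg : forall u : R, 0 < u -> is_derive u 1 g (h - x1 u).
  move=> u u0; have := dx u u0 => ?.
  rewrite /g; apply: is_derive_eq; rewrite ?scaler1 /GRing.scale /=; ring.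
have r0g : (0:R) = 0 -> g s @[s --> 0^'+] --> g 0.
  move=> _H0; rewrite /g; apply: cvgB => //.
  apply: cvg_at_right_filter; apply: cvgMr; exact: cvg_id.
have gnd : forall s t, 0 <= s -> s <= t -> g s <= g t.
  move=> s t s0 st; apply: (@nd _ g _ s t s0 st dg) => [u u0 ut|_].
    by rewrite subr_ge0; apply: ltW; apply: hgt; lra.
  exact: r0g.
have g0 : g 0 = 0 by rewrite /g x0 mulr0 subrr.
have g1 : 0 < g 1.
  rewrite -g0; apply: (@si _ g _ 0 1 (lexx 0) ltr01 dg) => // u u0 u1.
  by rewrite subr_gt0; apply: hgt; lra.
have Gni : forall t, T <= t -> g t - c^-1 * x1 t <= g T - c^-1 * x1 T.
  move=> t Tt.
  pose f := fun u => - (g u - c^-1 * x1 u).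
  have dfd : forall u : R, 0 < u -> is_derive u 1 f (x1 u + c^-1 * x2 u - h).
    move=> u u0; have := dg u u0 => ?; have := dx1 u u0 => ?.
    rewrite /f; apply: is_derive_eq; rewrite ?scaler1 /GRing.scale /=; ring.
  have := @nd _ f _ T t T0 Tt dfd.
  rewrite /f => H; suff : - (g T - c^-1 * x1 T) <= - (g t - c^-1 * x1 t) by lra.
  apply: H => [u su ut|s0]; last by exfalso; lra.
  rewrite subr_ge0; apply: hL; lra.
have gub : forall t, 0 <= t -> g t <= g T + c^-1 * h.
  move=> t t0; have hh : 0 <= c^-1 * h by apply: mulr_ge0; apply: ltW.
  case: (leP t T) => tT.
    by have := gnd t T t0 tT; lra.
  have := Gni t (ltW tT).
  have : c^-1 * x1 t <= c^-1 * h by apply: ler_wpM2l; [exact: ltW | exact: ltW (hgt t t0)].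
  have : 0 <= c^-1 * x1 T by apply: mulr_ge0; [exact: ltW | rewrite -x10; apply: x1nd].
  lra.
have [mu [mucv muub]] := @lim_nd _ g _ gnd gub.
have mupos : 0 < mu by apply: lt_le_trans g1 (muub 1 ler01).
exists h, mu; split => //.
move=> t t0; apply/andP; split.
  rewrite ge_max xge0 //=; have := muub t t0; rewrite /g; lra.
have := gnd 0 t (lexx 0) t0; rewrite g0 /g; lra.
Qed.
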